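(* Let $G=(V,E)$ be a graph with maximum degree $\Delta$ and let $W\subseteq V$ be such that the induced subgraph $\langle W\rangle$ is connected. Then for every equivalence class $\varphi$ of $\mathfrak d_{|S_v}(W)^*$ and every vertex $x\in W$ there is an edge $(x,y)\in\varphi$ with $(x,y)\in E\big(\bigcup_{v\in W}S_v\big)$. Moreover, $\mathfrak d_{|S_v}(W)^*$ has at most $\Delta$ equivalence classes.
   Context: All graphs are finite, simple and undirected. For a graph $G=(V,E)$ and $v\in V$, $E_v$ denotes the set of edges incident to $v$. For two distinct adjacent edges $e=(v,u)$, $f=(v,w)$, a square spanned by $e$ and $f$ is a $4$-cycle $v,u,x,w,v$ with $x\notin\{v,u,w\}$; it is chordless if neither $(u,w)$ nor $(v,x)$ is an edge of $G$. In a chordless square $v,u,x,w$, $(x,w)$ is the opposite edge of $(v,u)$ and $(x,u)$ is the opposite edge of $(v,w)$ (and vice versa). The relation $\delta(G)\subseteq E\times E$: $(e,f)\in\delta(G)$ iff (i) $e,f$ are distinct adjacent edges and it is not the case that $e$ and $f$ span exactly one square and that square is chordless; or (ii) $e,f$ are opposite edges of a chordless square; or (iii) $e=f$. For a relation $R$, $R^*$ is its transitive closure (finest equivalence relation containing $R$). Define $\mathfrak d_v=((E_v\times E)\cup(E\times E_v))\cap\delta(G)$ and $\mathfrak d_v^*$ the finest equivalence relation on $E$ containing $\mathfrak d_v$. Let $F_v\subseteq E\setminus E_v$ be the set of edges that are the edges not incident to $v$ of some chordless square spanned by two edges $e,e'\in E_v$ with $(e,e')\notin\mathfrak d_v^*$.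 The partial star product $S_v$ is the subgraph of $G$ with edge set $E_v\cup F_v$ and vertex set the endpoints of these edges. Define $\mathfrak d_{|S_v}=\{(e,f)\in\mathfrak d_v^*: e,f\in E(S_v)\}$ (an equivalence relation on $E(S_v)$), $\mathfrak d_{|S_v}(W)=\bigcup_{v\in W}\mathfrak d_{|S_v}$, and $\mathfrak d_{|S_v}(W)^*$ its transitive closure, an equivalence relation on $\bigcup_{v\in W}E(S_v)$. *)

(* Defs.v *)
(* A simple graph is a symmetric irreflexive relation
   [g : rel T] on a finite vertex type [T]; an edge is a 2-element set
   [[set x; y]] with [g x y]. Relations on edges are [rel {set T}]. *)
From HB Require Import structures.
From mathcomp Require Import all_boot all_order.
Set Implicit Arguments. Unset Strict Implicit. Unset Printing Implicit Defensive.

Section Defs.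
Variable T : finType.
Variable g : rel T.

Definition is_edge (s : {set T}) : bool :=
  [exists x, exists y, g x y && (s == [set x; y])].

(* the fourth vertices x of squares v,u,x,w spanned by (v,u),(v,w) *)
Definition squares (v u w : T) : {set T} :=
  [set x | [&& x != v, x != u, x != w, g u x & g x w]].

Definition csq (v u x w : T) : bool :=
  [&& g v u, g u x, g x w, g w v, x != v, x != u, x != w, u != w,
      ~~ g u w & ~~ g v x].

Definition delta1 (e1 e2 : {set T}) : bool :=
  (e1 != e2) &&
  [exists v, exists u, exists w,
     [&& e1 == [set v; u], e2 == [set v; w], g v u, g v w &
       ~~ ((#|squares v u w| == 1) &&
           [forall x in squares v u w, ~~ g u w && ~~ g v x])]].

Definition delta2 (e1 e2 : {set T}) : bool :=
  [exists v, exists u, exists x, exists w,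
     [&& csq v u x w, e1 == [set v; u] & e2 == [set x; w]]].

Definition delta (e1 e2 : {set T}) : bool :=
  [&& is_edge e1, is_edge e2 & [|| delta1 e1 e2, delta2 e1 e2 | e1 == e2]].

Definition dv (v : T) (e1 e2 : {set T}) : bool :=
  delta e1 e2 && ((v \in e1) || (v \in e2)).

Definition dvs (v : T) : rel {set T} :=
  connect (fun a b => dv v a b || dv v b a).

Definition inF (v : T) (f : {set T}) : bool :=
  (v \notin f) &&
  [exists u, exists x, exists w,
     [&& csq v u x w, ~~ dvs v [set v; u] [set v; w] &
         (f == [set u; x]) || (f == [set x; w])]].

Definition inS (v : T) (f : {set T}) : bool :=
  (is_edge f && (v \in f)) || inF v f.

Definition dS (v : T) (a b : {set T}) : bool :=
  [&& inS v a, inS v b & dvs v a b].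

Definition dW (W : {set T}) (a b : {set T}) : bool :=
  [exists v in W, dS v a b].

Definition DW (W : {set T}) (f : {set T}) : bool :=
  [exists v in W, inS v f].

Definition dWs (W : {set T}) : rel {set T} :=
  connect (fun a b => dW W a b || dW W b a).

Definition dWclass (W : {set T}) (e0 : {set T}) : {set {set T}} :=
  [set f | DW W f && dWs W e0 f].

Definition dWclasses (W : {set T}) : {set {set {set T}}} :=
  [set dWclass W e0 | e0 in [set e0 | DW W e0]].

Definition maxdeg : nat := \max_(v : T) #|[set u | g v u]|.

Definition induced_connected (W : {set T}) : Prop :=
  forall x y, x \in W -> y \in W ->
    connect (fun a b => [&& g a b, a \in W & b \in W]) x y.

End Defs.

(* Main.v *)
Require Import Defs.
From HB Require Import structures.
From mathcomp Require Import all_boot all_order.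
Set Implicit Arguments. Unset Strict Implicit.

Section Proof.
Variable T : finType.
Variable g : rel T.
Hypothesis gsym : symmetric g.
Hypothesis girr : irreflexive g.
Variable W : {set T}.

Lemma set2C (a b : T) : [set a; b] = [set b; a].
Proof. by rewrite setUC. Qed.

Lemma edge2 a b : g a b -> is_edge g [set a; b].
Proof. by move=> h; apply/existsP; exists a; apply/existsP; exists b; rewrite h eqxx. Qed.

Lemma inS_inc v a : g v a -> inS g v [set v; a].
Proof. by move=> h; rewrite /inS edge2 // set21. Qed.

Lemma DW_inc v a : v \in W -> g v a -> DW g W [set v; a].
Proof. by move=> vW h; apply/existsP; exists v; rewrite vW inS_inc. Qed.

Lemma dS_dWs v a b : v \in W -> dS g v a b -> dWs g W a b.
Proof.
move=> vW h; apply: connect1; apply/orP; left; apply/existsP; exists v.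
by rewrite vW.
Qed.

Lemma dv_dS v a b : inS g v a -> inS g v b -> dv g v a b -> dS g v a b.
Proof. by move=> ha hb h; rewrite /dS ha hb /dvs connect1 // h. Qed.

Lemma csq_swap v u x w : csq g v u x w -> csq g v w x u.
Proof.
rewrite /csq => /and5P [h1 h2 h3 h4 /and5P [h5 h6 h7 h8 /andP [h9 h10]]].
by rewrite gsym h4 gsym h3 gsym h2 gsym h1 h5 h7 h6 eq_sym h8 gsym h9 h10.
Qed.

Lemma step v w u : v \in W -> w \in W -> g v w -> g v u ->
  exists z, g w z && dWs g W [set v; u] [set w; z].
Proof.
move=> vW wW gvw gvu.
have gwv : g w v by rewrite gsym.
have Eb : dWs g W [set v; u] [set w; v] -> exists z, g w z && dWs g W [set v; u] [set w; z].
  by move=> h; exists v; rewrite gwv h.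
case: (eqVneq u w) => [->|nuw].
  by exists v; rewrite gwv set2C /dWs connect0.
have nuv : u != v by apply/eqP=> e; move: gvu; rewrite e girr.
have nwv : w != v by apply/eqP=> e; move: gvw; rewrite e girr.
case hb: ((#|squares g v u w| == 1) &&
           [forall x in squares g v u w, ~~ g u w && ~~ g v x]).
- case/andP: hb => /cards1P [x Ex] /forall_inP hx.
  have xin : x \in squares g v u w by rewrite Ex set11.
  have /andP[nguw ngvx] := hx x xin.
  move: xin; rewrite inE => /and5P [nxv nxu nxw gux gxw].
  have cs : csq g v u x w by rewrite /csq gvu gux gxw gwv nxv nxu nxw nuw nguw ngvx.
  case hd: (dvs g v [set v; u] [set v; w]).
    by apply: Eb; rewrite [[set w; v]]set2C; apply: (dS_dWs vW); rewrite /dS !inS_inc.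
  exists x; rewrite gsym gxw /= [[set w; x]]set2C; apply: (dS_dWs vW); apply: dv_dS.
  + exact: inS_inc.
  + apply/orP; right; rewrite /inF !inE negb_or eq_sym nxv eq_sym nwv /=.
    apply/existsP; exists u; apply/existsP; exists x; apply/existsP; exists w.
    by rewrite cs hd eqxx orbT.
  + rewrite /dv set21 andbT /delta edge2 // edge2 //=.
    apply/orP; right; apply/orP; left.
    apply/existsP; exists v; apply/existsP; exists u; apply/existsP; exists x;
      apply/existsP; exists w; by rewrite cs !eqxx.
- apply: Eb; rewrite [[set w; v]]set2C; apply: (dS_dWs vW); apply: dv_dS; try exact: inS_inc.
  rewrite /dv set21 andbT /delta !edge2 //=; apply/orP; left.
  apply/andP; split.
    apply/negP=> /eqP e; have : u \in [set v; w] by rewrite -e set22.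
    by rewrite !inE (negbTE nuv) (negbTE nuw).
  apply/existsP; exists v; apply/existsP; exists u; apply/existsP; exists w.
  by rewrite !eqxx gvu gvw hb.
Qed.

Definition Q e0 v := exists u, g v u && dWs g W e0 [set v; u].

Lemma Q_prop e0 v w : v \in W -> w \in W -> g v w -> Q e0 v -> Q e0 w.
Proof.
move=> vW wW gvw [u /andP[gvu h]].
have [z /andP[gwz h2]] := step vW wW gvw gvu.
by exists z; rewrite gwz; exact: (connect_trans h h2).
Qed.

Lemma Q_conn e0 v x : induced_connected g W -> v \in W -> x \in W -> Q e0 v -> Q e0 x.
Proof.
move=> Wc vW xW; move: (Wc v x vW xW) => /connectP [p pp ->] {xW}.
elim: p v vW pp => [//|a p IH] v vW /= /andP [/and3P [gva _ aW] pp] qv.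
exact: (IH a aW pp (Q_prop vW aW gva qv)).
Qed.

Lemma Q_base e0 : DW g W e0 -> exists2 v, v \in W & Q e0 v.
Proof.
case/existsP=> v /andP [vW H]; exists v => //.
case/orP: (H) => [/andP [/existsP [a /existsP [b /andP [gab /eqP E]]] ve]|].
  move: ve; rewrite E => /set2P [->|->].
    by exists b; rewrite gab /dWs connect0.
  by exists a; rewrite gsym gab set2C /dWs connect0.
case/andP=> _ /existsP [u /existsP [x /existsP [w /and3P [cs _ /orP [/eqP E|/eqP E]]]]].
- have cs' := csq_swap cs.
  have gvw : g v w by move: cs'; rewrite /csq => /andP [].
  exists w; rewrite gvw /=; apply: connect1; apply/orP; right; apply/existsP; exists v.
  rewrite vW /dS H inS_inc //= /dvs connect1 //.
  rewrite /dv /delta E [[set u; x]]set2C !inE eqxx /= !andbT.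
  move: (cs'); rewrite /csq => /and4P [_ h2 h3 _]; rewrite !edge2 //=.
  apply/orP; left; apply/orP; right; apply/orP; left.
  apply/existsP; exists v; apply/existsP; exists w; apply/existsP; exists x;
    apply/existsP; exists u; by rewrite cs' !eqxx.
- have gvu : g v u by move: cs; rewrite /csq => /andP [].
  exists u; rewrite gvu /=; apply: connect1; apply/orP; right; apply/existsP; exists v.
  rewrite vW /dS H inS_inc //= /dvs connect1 //.
  rewrite /dv /delta E !inE eqxx /= !andbT.
  move: (cs); rewrite /csq => /and4P [_ h2 h3 _]; rewrite !edge2 //=.
  apply/orP; left; apply/orP; right; apply/orP; left.
  apply/existsP; exists v; apply/existsP; exists u; apply/existsP; exists x;
    apply/existsP; exists w; by rewrite cs !eqxx.
Qed.

End Proof.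

Theorem lemma3p5 (T : finType) (g : rel T)
  (gsym : symmetric g) (girr : irreflexive g)
  (W : {set T}) (Wconn : induced_connected g W) :
  (forall phi, phi \in dWclasses g W ->
     forall x, x \in W -> exists y, ([set x; y] \in phi) && DW g W [set x; y])
  /\ #|dWclasses g W| <= maxdeg g.
Proof.
have key : forall e0 x, DW g W e0 -> x \in W -> Q g W e0 x.
  move=> e0 x h xW; have [v vW qv] := Q_base gsym h.
  exact: (Q_conn gsym girr Wconn vW xW qv).
split.
  move=> phi /imsetP [e0]; rewrite inE => h -> x xW.
  have [y /andP [gxy hy]] := key e0 x h xW.
  exists y; rewrite inE hy !(DW_inc xW gxy) //.
case: (set_0Vmem W) => [W0|[x xW]].
  rewrite (_ : dWclasses g W = set0) ?cards0 //.
  apply/setP=> c; rewrite inE; apply/negP=> /imsetP [e0]; rewrite inE.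
  by case/existsP=> v; rewrite W0 inE.
pose N := [set u | g x u].
apply: (@leq_trans #|[set dWclass g W [set x; y] | y in N]|).
  apply: subset_leq_card; apply/subsetP=> c /imsetP [e0]; rewrite inE => h ->.
  have [y /andP [gxy hy]] := key e0 x h xW.
  apply/imsetP; exists y; first by rewrite inE.
  apply/setP=> f; rewrite !inE; congr (_ && _).
  apply: same_connect => //; apply: sym_connect_sym => a b; exact: orbC.
apply: (leq_trans (leq_imset_card _ _)).
exact: (leq_bigmax (F := fun v => #|[set u | g v u]|) x).
Qed.
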